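(* Let $\boldsymbol{N}\in\mathbb{R}^3$ with $\|\boldsymbol{N}\|=1$ and $\boldsymbol{G}^{\mathrm{ti}}=\boldsymbol{N}\otimes\boldsymbol{N}$. For $\boldsymbol{F}\in\mathrm{GL}^+(3)$ let $\boldsymbol{H}=\operatorname{cof}\boldsymbol{F}=(\det\boldsymbol{F})\boldsymbol{F}^{-T}$. Then the functions $$I_4^{\mathrm{ti}}(\boldsymbol{F})=\|\boldsymbol{F}\|^2-\|\boldsymbol{F}\boldsymbol{G}^{\mathrm{ti}}\|^2,\qquad I_5^{\mathrm{ti}}(\boldsymbol{F})=\|\boldsymbol{H}\|^2-\|\boldsymbol{H}\boldsymbol{G}^{\mathrm{ti}}\|^2$$ are twice continuously differentiable and polyconvex.
   Context: $\|\cdot\|$ is the Frobenius norm and $\mathrm{GL}^+(3)$ is the set of real $3\times3$ matrices with positive determinant. A function $W$ of $\boldsymbol{F}$ is polyconvex if it admits a representation $W(\boldsymbol{F})=\mathcal{P}(\boldsymbol{F},\operatorname{cof}\boldsymbol{F},\det\boldsymbol{F})$ with $\mathcal{P}$ convex in its arguments. *)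

(* Defs.v *)
From HB Require Import structures.
From mathcomp Require Import all_boot all_order all_algebra.
From mathcomp Require Import all_classical all_reals all_analysis.
Set Implicit Arguments. Unset Strict Implicit. Unset Printing Implicit Defensive.
Import Order.TTheory GRing.Theory Num.Theory.
Import numFieldNormedType.Exports.
Local Open Scope classical_set_scope.
Local Open Scope ring_scope.

Definition frob {R : realType} {m n : nat} (A : 'M[R]_(m, n)) : R :=
  Num.sqrt (\sum_(i < m) \sum_(j < n) (A i j) ^+ 2).

(* cofactor matrix: cof F = (adj F)^T  (= (det F) F^{-T} for invertible F) *)
Definition cof {R : realType} (F : 'M[R]_3) : 'M[R]_3 := (\adj F)^T.

Definition GLplus3 {R : realType} : set 'M[R]_3 := [set F | 0 < \det F].

Definition C2_on {R : realType} (U : set 'M[R]_3) (f : 'M[R]_3 -> R) : Prop :=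
  forall i j k l : 'I_3,
    let e1 := delta_mx i j : 'M[R]_3 in
    let e2 := delta_mx k l : 'M[R]_3 in
    forall x, U x ->
      [/\ {for x, continuous f},
          derivable f x e1,
          {for x, continuous ('D_e1 f)},
          derivable ('D_e1 f) x e2 &
          {for x, continuous ('D_e2 ('D_e1 f))}].

Definition convex_P {R : realType} (P : 'M[R]_3 -> 'M[R]_3 -> R -> R) : Prop :=
  forall (F1 H1 F2 H2 : 'M[R]_3) (d1 d2 t : R),
    0 < d1 -> 0 < d2 -> 0 <= t <= 1 ->
    P (t *: F1 + (1 - t) *: F2) (t *: H1 + (1 - t) *: H2) (t * d1 + (1 - t) * d2)
      <= t * P F1 H1 d1 + (1 - t) * P F2 H2 d2.

Definition polyconvex {R : realType} (W : 'M[R]_3 -> R) : Prop :=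
  exists P : 'M[R]_3 -> 'M[R]_3 -> R -> R,
    convex_P P /\ forall F, GLplus3 F -> W F = P F (cof F) (\det F).

Definition Gti {R : realType} (N : 'cV[R]_3) : 'M[R]_3 := N *m N^T.

Definition I4ti {R : realType} (N : 'cV[R]_3) (F : 'M[R]_3) : R :=
  frob F ^+ 2 - frob (F *m Gti N) ^+ 2.

Definition I5ti {R : realType} (N : 'cV[R]_3) (F : 'M[R]_3) : R :=
  frob (cof F) ^+ 2 - frob (cof F *m Gti N) ^+ 2.

(* Main.v *)
Require Import Defs.
From HB Require Import structures.
From mathcomp Require Import all_boot all_order all_algebra.
From mathcomp Require Import all_classical all_reals all_analysis.
From mathcomp Require Import ring lra.
Import Order.TTheory GRing.Theory Num.Theory.
Import numFieldNormedType.Exports.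
Local Open Scope classical_set_scope.
Local Open Scope ring_scope.
Section CK.
Variable R : realType.
Notation M := 'M[R]_3.

Fixpoint Ck (k : nat) (f : M -> R) : Prop :=
  match k with
  | 0 => continuous f
  | k'.+1 => continuous f /\ forall v, (forall x, derivable f x v) /\ Ck k' ('D_v f)
  end.

Lemma Ck_cont k f : Ck k f -> continuous f.
Proof. by case: k => //= k []. Qed.

Lemma CkS k f : Ck k.+1 f -> Ck k f.
Proof.
elim: k f => [|k IH] f /=; first by case.
move=> [cf H]; split=> // v; have [d Hk] := H v; split=> //; exact: IH.
Qed.

Lemma Ck_ext k f g : f = g -> Ck k f -> Ck k g.
Proof. by move->. Qed.

Lemma Ck_cst k (a : R) : Ck k (fun _ => a).
Proof.
elim: k a => [|k IH] a /=; first exact: cst_continuous.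
split; first exact: cst_continuous.
move=> v; split; first by move=> x; exact: derivable_cst.
apply: (@Ck_ext _ (fun _ : M => (0:R))) => //.
by apply/funext => x; rewrite derive_cst.
Qed.

Lemma Ck_add k f g : Ck k f -> Ck k g -> Ck k (fun x => f x + g x).
Proof.
elim: k f g => [|k IH] f g /=.
  by move=> cf cg x; exact: (continuousD (cf x) (cg x)).
move=> [cf Hf] [cg Hg]; split; first by move=> x; exact: (continuousD (cf x) (cg x)).
move=> v; have [df Cf] := Hf v; have [dg Cg] := Hg v; split.
  by move=> x; apply: (derivableD (df x) (dg x)).
apply: (@Ck_ext _ (fun x : M => 'D_v f x + 'D_v g x)); last exact: IH.
by apply/funext => x; rewrite -deriveD.
Qed.

Lemma Ck_mul k f g : Ck k f -> Ck k g -> Ck k (fun x => f x * g x).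
Proof.
elim: k f g => [|k IH] f g /=.
  by move=> cf cg x; exact: (continuousM (cf x) (cg x)).
move=> [cf Hf] [cg Hg]; split; first by move=> x; exact: (continuousM (cf x) (cg x)).
move=> v; have [df Cf] := Hf v; have [dg Cg] := Hg v; split.
  by move=> x; apply: (derivableM (df x) (dg x)).
apply: (@Ck_ext _ (fun x : M => f x * 'D_v g x + g x * 'D_v f x)).
  by apply/funext => x; rewrite -deriveM.
have Hf' : Ck k f by apply: CkS; split.
have Hg' : Ck k g by apply: CkS; split.
by apply: Ck_add; apply: IH.
Qed.


Lemma derive_coord (i j : 'I_3) (x v : M) :
  'D_v (fun F : M => F i j) x = v i j.
Proof.
have @f : {linear M -> R}.
  by exists (fun N : M => N i j); do 2![eexists]; do ?[constructor];
     rewrite ?mxE// => ? *; rewrite ?mxE//; move=> ?; rewrite !mxE.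
rewrite (_ : (fun _ => _) = f) //.
rewrite deriveE; last exact/linear_differentiable/coord_continuous.
by rewrite diff_lin //; exact: coord_continuous.
Qed.

Lemma Ck_coord k (i j : 'I_3) : Ck k (fun F : M => F i j).
Proof.
case: k => [|k] /=; first exact: coord_continuous.
split; first exact: coord_continuous.
move=> v; split; first by move=> x; apply: diff_derivable; exact: differentiable_coord.
apply: (@Ck_ext _ (fun _ : M => v i j)); last exact: Ck_cst.
by apply/funext => x; rewrite derive_coord.
Qed.

Lemma Ck_sum k (I : Type) (r : seq I) (P : pred I) (F : I -> M -> R) :
  (forall i, Ck k (F i)) -> Ck k (fun x => \sum_(i <- r | P i) F i x).
Proof.
move=> HF; elim: r => [|a r IH].
  by apply: (@Ck_ext _ (fun _ => 0)); [apply/funext => x; rewrite big_nil|exact: Ck_cst].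
case: (boolP (P a)) => Pa.
  apply: (@Ck_ext _ (fun x => F a x + \sum_(i <- r | P i) F i x)).
    by apply/funext => x; rewrite big_cons Pa.
  exact: Ck_add.
apply: (@Ck_ext _ (fun x => \sum_(i <- r | P i) F i x)) => //.
by apply/funext => x; rewrite big_cons (negbTE Pa).
Qed.

Lemma Ck_prod k (I : Type) (r : seq I) (P : pred I) (F : I -> M -> R) :
  (forall i, Ck k (F i)) -> Ck k (fun x => \prod_(i <- r | P i) F i x).
Proof.
move=> HF; elim: r => [|a r IH].
  by apply: (@Ck_ext _ (fun _ => 1)); [apply/funext => x; rewrite big_nil|exact: Ck_cst].
case: (boolP (P a)) => Pa.
  apply: (@Ck_ext _ (fun x => F a x * \prod_(i <- r | P i) F i x)).
    by apply/funext => x; rewrite big_cons Pa.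
  exact: Ck_mul.
apply: (@Ck_ext _ (fun x => \prod_(i <- r | P i) F i x)) => //.
by apply/funext => x; rewrite big_cons (negbTE Pa).
Qed.

Lemma Ck_sub k f g : Ck k f -> Ck k g -> Ck k (fun x => f x - g x).
Proof.
move=> Hf Hg.
apply: (@Ck_ext _ (fun x => f x + (-1) * g x)).
  by apply/funext => x; rewrite mulN1r.
by apply: Ck_add => //; apply: Ck_mul => //; exact: Ck_cst.
Qed.

Lemma Ck_det k n (A : M -> 'M[R]_n) :
  (forall i j, Ck k (fun F => A F i j)) -> Ck k (fun F => \det (A F)).
Proof.
move=> HA; rewrite /determinant.
apply: Ck_sum => s; apply: Ck_mul; first exact: Ck_cst.
by apply: Ck_prod => i; exact: HA.
Qed.

Lemma Ck_mulmx k m n p (A : M -> 'M[R]_(m, n)) (B : M -> 'M[R]_(n, p)) :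
  (forall i j, Ck k (fun F => A F i j)) -> (forall i j, Ck k (fun F => B F i j)) ->
  forall i j, Ck k (fun F => (A F *m B F) i j).
Proof.
move=> HA HB i j.
apply: (@Ck_ext _ (fun F => \sum_l A F i l * B F l j)).
  by apply/funext => x; rewrite mxE.
by apply: Ck_sum => l; apply: Ck_mul.
Qed.

Lemma Ck_cof k (A : M -> M) :
  (forall i j, Ck k (fun F => A F i j)) -> forall i j, Ck k (fun F => cof (A F) i j).
Proof.
move=> HA i j.
apply: (@Ck_ext _ (fun F => (-1) ^+ (i + j) * \det (row' i (col' j (A F))))).
  by apply/funext => x; rewrite /cof !mxE.
apply: Ck_mul; first exact: Ck_cst.
by apply: Ck_det => a b; apply: (@Ck_ext _ (fun F => A F (lift i a) (lift j b))) => //;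
  apply/funext => x; rewrite !mxE.
Qed.

Lemma Ck_frob2 k m n (A : M -> 'M[R]_(m, n)) :
  (forall i j, Ck k (fun F => A F i j)) -> Ck k (fun F => frob (A F) ^+ 2).
Proof.
move=> HA.
apply: (@Ck_ext _ (fun F => \sum_i \sum_j (A F i j) ^+ 2)).
  apply/funext => x; rewrite /frob sqr_sqrtr //.
  by apply: sumr_ge0 => i _; apply: sumr_ge0 => j _; exact: sqr_ge0.
by apply: Ck_sum => i; apply: Ck_sum => j; rewrite /=; apply: Ck_mul => //; apply: Ck_mul => //; exact: Ck_cst.
Qed.

End CK.

Section CV.
Variable R : realType.

Lemma frob2E m n (A : 'M[R]_(m, n)) : frob A ^+ 2 = \sum_i \sum_j (A i j) ^+ 2.
Proof.
rewrite /frob sqr_sqrtr //.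
by apply: sumr_ge0 => i _; apply: sumr_ge0 => j _; exact: sqr_ge0.
Qed.

Lemma frob2_comb m n (A B : 'M[R]_(m, n)) (t : R) :
  frob (t *: A + (1 - t) *: B) ^+ 2 =
  t * frob A ^+ 2 + (1 - t) * frob B ^+ 2 - t * (1 - t) * frob (A - B) ^+ 2.
Proof.
rewrite !frob2E !mulr_sumr -big_split -sumrB /=.
apply: eq_bigr => i _; rewrite !mulr_sumr -big_split -sumrB /=.
by apply: eq_bigr => j _; rewrite !mxE; ring.
Qed.

Lemma I4_comb (N : 'cV[R]_3) (A B : 'M[R]_3) (t : R) :
  I4ti N (t *: A + (1 - t) *: B) =
  t * I4ti N A + (1 - t) * I4ti N B - t * (1 - t) * I4ti N (A - B).
Proof.
rewrite /I4ti mulmxDl -!scalemxAl mulmxBl !frob2_comb; ring.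
Qed.

Lemma row_ineq (a0 a1 a2 n0 n1 n2 : R) :
  n0 ^+ 2 + (n1 ^+ 2 + n2 ^+ 2) = 1 ->
  (a0*(n0*n0) + (a1*(n1*n0) + a2*(n2*n0)))^+2 +
  ((a0*(n0*n1) + (a1*(n1*n1) + a2*(n2*n1)))^+2 +
   (a0*(n0*n2) + (a1*(n1*n2) + a2*(n2*n2)))^+2)
  <= a0 ^+ 2 + (a1 ^+ 2 + a2 ^+ 2).
Proof.
move=> hn; rewrite -subr_ge0.
have -> : a0 ^+ 2 + (a1 ^+ 2 + a2 ^+ 2) -
  ((a0*(n0*n0) + (a1*(n1*n0) + a2*(n2*n0)))^+2 +
  ((a0*(n0*n1) + (a1*(n1*n1) + a2*(n2*n1)))^+2 +
   (a0*(n0*n2) + (a1*(n1*n2) + a2*(n2*n2)))^+2)) =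
  ((a0*n1 - a1*n0)^+2 + (a0*n2 - a2*n0)^+2 + (a1*n2 - a2*n1)^+2)
  + (a0 * n0 + a1 * n1 + a2 * n2) ^+ 2 * (1 - (n0 ^+ 2 + (n1 ^+ 2 + n2 ^+ 2)))
  + (a0 ^+ 2 + (a1 ^+ 2 + a2 ^+ 2)) * (1 - (n0 ^+ 2 + (n1 ^+ 2 + n2 ^+ 2))).
  by ring.
rewrite hn subrr !mulr0 !addr0.
by rewrite !addr_ge0 // sqr_ge0.
Qed.

Lemma I4_ge0 (N : 'cV[R]_3) (hN : frob N = 1) (X : 'M[R]_3) : 0 <= I4ti N X.
Proof.
have h1 : frob N ^+ 2 = 1 by rewrite hN expr1n.
rewrite frob2E in h1.
rewrite /I4ti !frob2E subr_ge0.
move: h1; rewrite /Gti.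
rewrite !big_ord_recl !big_ord0 !mxE.
rewrite !big_ord_recl !big_ord0 !mxE.
rewrite !big_ord_recl !big_ord0 !mxE.
rewrite !addr0 => h1.
by apply: lerD; [|apply: lerD]; apply: row_ineq.
Qed.
End CV.

Lemma Ck2_C2 (R : realType) (f : 'M[R]_3 -> R) : Ck R 2 f -> C2_on GLplus3 f.
Proof.
move=> [cf H] i j k l e1 e2 x _.
have [d1 [c1 H1]] := H e1.
have [d2 c2] := H1 e2.
split. exact: cf. exact: d1. exact: (c1 x). exact: d2. exact: (c2 x). Qed.

Theorem corollary1 (R : realType) (N : 'cV[R]_3) (hN : frob N = 1) :
  C2_on GLplus3 (I4ti N) /\ C2_on GLplus3 (I5ti N) /\
  polyconvex (I4ti N) /\ polyconvex (I5ti N).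
Proof.
have HG : forall k (i j : 'I_3), Ck R k (fun _ : 'M[R]_3 => Gti N i j).
  by move=> k i j; exact: Ck_cst.
split.
  apply: Ck2_C2; rewrite /I4ti; apply: Ck_sub.
    by apply: Ck_frob2 => i j; exact: Ck_coord.
  apply: Ck_frob2; apply: Ck_mulmx => // i j; exact: Ck_coord.
split.
  apply: Ck2_C2; rewrite /I5ti; apply: Ck_sub.
    by apply: Ck_frob2; apply: Ck_cof => i j; exact: Ck_coord.
  apply: Ck_frob2; apply: Ck_mulmx => //; apply: Ck_cof => i j; exact: Ck_coord.
have cvx : forall (t : R) A B, 0 <= t <= 1 ->
    I4ti N (t *: A + (1 - t) *: B) <= t * I4ti N A + (1 - t) * I4ti N B.
  move=> t A B /andP[t0 t1]; rewrite I4_comb lerBlDr lerDl.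
  apply: mulr_ge0; last exact: I4_ge0.
  by apply: mulr_ge0 => //; rewrite subr_ge0.
split.
  exists (fun F _ _ => I4ti N F); split => //.
  by move=> F1 H1 F2 H2 d1 d2 t _ _ ht /=; exact: cvx.
exists (fun _ H _ => I4ti N H); split => //.
by move=> F1 H1 F2 H2 d1 d2 t _ _ ht /=; exact: cvx.
Qed.
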